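(* Let $\kappa$ be a cardinal, $\mathscr A$ an infinite set and $\{X_\alpha:\alpha\in\mathscr A\}$ a family of Banach spaces each of which is $\mathrm{ASQ}_{<\kappa}$. If $\mathcal U$ is an $\aleph_1$-incomplete non-principal ultrafilter over $\mathscr A$, then the ultraproduct $(X_\alpha)_{\mathcal U}$ is $\mathrm{SQ}_{<\kappa}$.
   Context: A non-principal ultrafilter $\mathcal U$ over $\mathscr A$ is $\aleph_1$-incomplete if it is not closed under countable intersections (equivalently, there is $f:\mathscr A\to(0,\infty)$ with $\lim_{\mathcal U}f(\alpha)=0$). The ultraproduct $(X_\alpha)_{\mathcal U}$ is the quotient $\ell_\infty(\mathscr A,X_\alpha)/c_{0,\mathcal U}(\mathscr A,X_\alpha)$, where $\ell_\infty(\mathscr A,X_\alpha)$ consists of bounded families $(x_\alpha)$ with $x_\alpha\in X_\alpha$ under the sup norm and $c_{0,\mathcal U}$ is the subspace of families with $\lim_{\mathcal U}\|x_\alpha\|=0$; its norm satisfies $\|(x_\alpha)_{\mathcal U}\|=\lim_{\mathcal U}\|x_\alpha\|$. A Banach space $Z$ is $\mathrm{ASQ}_{<\kappa}$ if for every set $A\subset S_Z$ with $|A|<\kappa$ and every $\varepsilon>0$ there exists $y\in S_Z$ with $\|x\pm y\|\le 1+\varepsilon$ for all $x\in A$; $Z$ is $\mathrm{SQ}_{<\kappa}$ if for every such $A$ there exists $y\in S_Z$ with $\|x\pm y\|\le 1$ for all $x\in A$. *)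

(* Defs.v *)
From HB Require Import structures.
From mathcomp Require Import all_boot all_order all_algebra.
From mathcomp Require Import all_classical all_reals all_analysis.
Set Implicit Arguments. Unset Strict Implicit. Unset Printing Implicit Defensive.
Import Order.TTheory GRing.Theory Num.Theory.
Import numFieldNormedType.Exports.
Local Open Scope classical_set_scope.
Local Open Scope ring_scope.

(* Cardinals: a cardinal kappa is represented as the cardinality of a type K.
   [card_lt_kappa K S] means |S| < |K| (= kappa). *)
Definition card_lt_kappa (K : Type) {T : Type} (S : set T) : Prop :=
  card_le S [set: K] /\ ~ card_le [set: K] S.

Definition unit_sphere (R : realType) (Z : normedModType R) : set Z :=
  [set z | `|z| = 1].

Definition ASQ_lt (R : realType) (K : Type) (Z : normedModType R) : Prop :=
  forall (S : set Z), S `<=` @unit_sphere R Z -> card_lt_kappa K S ->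
  forall eps : R, 0 < eps ->
  exists2 y, @unit_sphere R Z y &
    forall x, S x -> `|x + y| <= 1 + eps /\ `|x - y| <= 1 + eps.

Definition SQ_lt (R : realType) (K : Type) (Z : normedModType R) : Prop :=
  forall (S : set Z), S `<=` @unit_sphere R Z -> card_lt_kappa K S ->
  exists2 y, @unit_sphere R Z y &
    forall x, S x -> `|x + y| <= 1 /\ `|x - y| <= 1.

Definition nonprincipal (A : Type) (U : set_system A) : Prop :=
  ~ exists a : A, forall B : set A, U B <-> B a.

Definition aleph1_incomplete (A : Type) (U : set_system A) : Prop :=
  exists B : nat -> set A, (forall n, U (B n)) /\ ~ U (\bigcap_n B n).

Section Ultraproduct.
Variables (R : realType) (A : Type) (X : A -> normedModType R)
          (U : set_system A).

Definition linf_bounded (x : forall a, X a) : Prop :=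
  exists M : R, forall a, `|x a| <= M.

Definition fam_add (x y : forall a, X a) : forall a, X a := fun a => x a + y a.
Definition fam_sub (x y : forall a, X a) : forall a, X a := fun a => x a - y a.

Definition up_seminorm (x : forall a, X a) : R :=
  lim ((fun a => `|x a|) @ U).

Definition up_class (x : forall a, X a) : set (forall a, X a) :=
  [set y | linf_bounded y /\ up_seminorm (fam_sub y x) = 0].

(* the ultraproduct (X_a)_U = ell_infty / c_{0,U}, as the type of classes *)
Definition ultraproduct : Type :=
  {C : set (forall a, X a) | exists x, linf_bounded x /\ C = up_class x}.

Definition up_rep (C : ultraproduct) : forall a, X a :=
  proj1_sig (cid (proj2_sig C)).

(* the quotient norm ||(x_a)_U|| = lim_U ||x_a||; sums/differences of
   classes are classes of sums/differences of representatives *)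
Definition up_norm (C : ultraproduct) : R := up_seminorm (up_rep C).
Definition up_norm_add (C D : ultraproduct) : R :=
  up_seminorm (fam_add (up_rep C) (up_rep D)).
Definition up_norm_sub (C D : ultraproduct) : R :=
  up_seminorm (fam_sub (up_rep C) (up_rep D)).

Definition ultraproduct_SQ_lt (K : Type) : Prop :=
  forall (S : set ultraproduct), (forall C, S C -> up_norm C = 1) ->
  card_lt_kappa K S ->
  exists2 Y : ultraproduct, up_norm Y = 1 &
    forall C, S C -> up_norm_add C Y <= 1 /\ up_norm_sub C Y <= 1.

End Ultraproduct.

(* Main.v *)
Require Import Defs.
From HB Require Import structures.
From mathcomp Require Import all_boot all_order all_algebra.
From mathcomp Require Import all_classical all_reals all_analysis.
From mathcomp Require Import lra.
Set Implicit Arguments. Unset Strict Implicit.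
Import Order.TTheory GRing.Theory Num.Theory.
Import numFieldNormedType.Exports.
Local Open Scope classical_set_scope.
Local Open Scope ring_scope.

Section Helpers.
Variables (R : realType) (A : Type) (U : set_system A).
Hypothesis UU : UltraFilter U.

Lemma ultra_bnd_cvg (f : A -> R) (M : R) :
  (forall a, `|f a| <= M) -> exists l : R, f @ U --> l.
Proof.
move=> fM.
have : (f @ U) `[-M, M]%classic.
  apply: (@filterS _ U _ setT); last exact: filterT.
  move=> a _ /=; rewrite in_itv /= -ler_norml; exact: fM.
move=> /(@segment_compact R (-M) M (f @ U) _) [p [_ cp]].
exists p => N Np.
have [//|] := in_ultra_setVsetC (f @^-1` N) UU.
move=> Hc; have [a [/= Ha1 Ha2]] := cp (~` N) N Hc Np.
by [].
Qed.

Lemma cvg_lim_eq (f : A -> R) l : f @ U --> l -> lim (f @ U) = l.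
Proof. by move=> /cvg_lim; apply. Qed.

Lemma lim_le_near (f : A -> R) l c : f @ U --> l ->
  (forall e, 0 < e -> U [set a | f a <= c + e]) -> l <= c.
Proof.
move=> /cvgrPdist_lt fl Hc; rewrite leNgt; apply/negP => lc.
have e0 : 0 < (l - c) / 2 by rewrite divr_gt0 // subr_gt0.
have H1 : U [set a | `|l - f a| < (l - c) / 2] := fl _ e0.
have [a [/= h1 h2]] := filter_ex (filterI H1 (Hc _ e0)).
have : l - f a < (l - c) / 2 by apply: le_lt_trans h1; exact: ler_norm.
lra.
Qed.


Lemma eps_ex (B : nat -> set A) : (forall n, U (B n)) -> ~ U (\bigcap_n B n) ->
  exists eps : A -> R, (forall a, 0 < eps a) /\
    forall e, 0 < e -> U [set a | eps a <= e].
Proof.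
move=> HB HI.
have HcI : U (~` \bigcap_n B n) by case: (in_ultra_setVsetC (\bigcap_n B n) UU).
have Hfin k : U [set a | forall m, (m <= k)%N -> B m a].
  elim: k => [|k IH].
    apply: filterS (HB 0%N) => a Ba m; rewrite leqn0 => /eqP -> //.
  apply: filterS (filterI IH (HB k.+1)) => a [h1 h2] m.
  rewrite leq_eqVlt => /orP [/eqP -> //|]; rewrite ltnS; exact: h1.
pose eps a : R := match pselect (exists n, ~ B n a) with
  left h => ((proj1_sig (cid h)).+1%:R)^-1 | right _ => 1 end.
exists eps; split.
  move=> a; rewrite /eps; match goal with |- context [pselect ?P] => destruct (pselect P) as [h|h] end; last exact: ltr01.
  by rewrite invr_gt0 ltr0n.
move=> e e0.
pose k := Num.Def.trunc (e^-1).
have Hk : e^-1 < k.+1%:R := truncnS_gt _.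
apply: filterS (filterI HcI (Hfin k)) => a [nI Hk'].
rewrite /= /eps; match goal with |- context [pselect ?P] => destruct (pselect P) as [h|h] end; last first.
  exfalso; apply: nI => n _; apply: contrapT => nB; apply: h; exists n; exact: nB.
destruct (cid h) as [n nBn]; simpl.
have kn : (k < n)%N by rewrite ltnNge; apply/negP => /Hk'.
have kn' : k.+1%:R <= n.+1%:R :> R by rewrite ler_nat ltnS ltnW.
rewrite invf_ple ?posrE ?ltr0n //.
exact: ltW (lt_le_trans Hk kn').
Qed.

Lemma pt_bound (V : normedModType R) (x y y' : V) (e1 e2 e3 : R) :
  x != 0 -> `|(Num.norm x)^-1 *: x + y| <= 1 + e2 -> `|Num.norm x - 1| <= e1 ->
  `|y' - y| <= e3 -> `|x + y'| <= 1 + e1 + e2 + e3.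
Proof.
move=> x0 h2 h1 h3.
have nx : 0 < `|x| by rewrite normr_gt0.
have E : x + y' = (x - `|x|^-1 *: x) + (`|x|^-1 *: x + y) + (y' - y).
  by rewrite (addrA (x - _)) subrK -addrA [y + _]addrC subrK.
have Ex : `|x - (Num.norm x)^-1 *: x| = `|Num.norm x - 1|.
  rewrite -{1}(scale1r x) -scalerBl normrZ.
  have -> : 1 - `|x|^-1 = (`|x| - 1) / `|x| by rewrite mulrBl mulfV ?gt_eqF // mul1r.
  by rewrite normrM normrV ?unitfE ?gt_eqF // normr_id mulfVK ?gt_eqF.
rewrite E; apply: le_trans (ler_normD _ _) _.
apply: le_trans (lerD (ler_normD _ _) (lexx _)) _.
rewrite Ex; lra.
Qed.


Lemma pt_bound' (V : normedModType R) (x y y' : V) (e e2 : R) :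
  0 < e -> `|1 - Num.norm x| < e / 3 -> e2 <= e / 3 -> `|y| = 1 ->
  `|0 - `|y - y'| | < e / 3 ->
  (x != 0 -> `|(Num.norm x)^-1 *: x + y| <= 1 + e2) ->
  `|x + y'| <= 1 + e.
Proof.
move=> e0 h1 he2 ny h3 h2.
rewrite sub0r normrN normr_id in h3.
have h3' : `|y' - y| <= e / 3 by rewrite distrC ltW.
have [xz|x0] := eqVneq x 0.
  rewrite xz normr0 subr0 normr1 in h1; rewrite xz.
  rewrite add0r; have -> : y' = y + (y' - y) by rewrite addrC subrK.
  apply: le_trans (ler_normD _ _) _; rewrite ny; lra.
have h1' : `|Num.norm x - 1| <= e / 3 by rewrite distrC ltW.
have := pt_bound x0 (h2 x0) h1' h3'; lra.
Qed.

End Helpers.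

Unset Implicit Arguments. Set Strict Implicit.
Theorem theorem4p8 (R : realType) (K : Type) (A : Type)
    (X : A -> completeNormedModType R) (U : set_system A) :
  infinite_set [set: A] ->
  (forall a, ASQ_lt K (X a)) ->
  UltraFilter U -> nonprincipal U -> aleph1_incomplete U ->
  ultraproduct_SQ_lt (fun a => (X a : normedModType R)) U K.
Proof.
move=> _ Hasq UU _ [B [HB HBn]] S HS HSk.
have [eps [eps0 epsU]] := @eps_ex R _ _ UU _ HB HBn.
pose X' := fun a => (X a : normedModType R).
have rep_bnd : forall C : ultraproduct X' U,
    linf_bounded (up_rep C) /\ proj1_sig C = up_class U (up_rep C).
  by move=> C; exact: (proj2_sig (cid (proj2_sig C))).
have normcvg : forall f : A -> R, (exists M, forall a, `|f a| <= M) ->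
    f @ U --> lim (f @ U).
  move=> f [M fM]; have [l fl] := ultra_bnd_cvg UU fM.
  by rewrite (cvg_lim_eq UU fl).
have bnd_norm : forall x : forall a, X' a, linf_bounded x ->
    exists M, forall a, `| `|x a| | <= M.
  by move=> x [M xM]; exists M => a; rewrite normr_id.
pose Sa a : set (X' a) := [set (`|up_rep C a|)^-1 *: up_rep C a |
   C in [set C | S C /\ up_rep C a != 0]].
have HSa : forall a, exists2 y : X' a, unit_sphere y &
    forall x, Sa a x -> `|x + y| <= 1 + eps a /\ `|x - y| <= 1 + eps a.
  move=> a; apply: (Hasq a (Sa a)); last exact: eps0.
    move=> z [C [SC nz] <-]; rewrite /unit_sphere /= normrZ normrV ?unitfE ?normr_eq0 //.
    by rewrite normr_id mulVf // normr_eq0.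
  have SaS : (Sa a #<= S)%card.
    apply: (@card_le_trans _ _ _ ((fun C => (`|up_rep C a|)^-1 *: up_rep C a) @` S)).
      by apply: subset_card_le => z [C [SC _] <-]; exists C.
    exact: card_image_le.
  split; first exact: (card_le_trans SaS HSk.1).
  by move=> KSa; apply: HSk.2; exact: (card_le_trans KSa SaS).
pose y : forall a, X' a := fun a => sval (cid2 (HSa a)).
have yS : forall a, `|y a| = 1 by move=> a; rewrite /y; case: cid2.
have yP : forall a x, Sa a x -> `|x + y a| <= 1 + eps a /\ `|x - y a| <= 1 + eps a.
  by move=> a; rewrite /y; case: cid2.
have ybnd : linf_bounded y by exists 1 => a; rewrite yS.
pose Y : ultraproduct X' U := exist _ (up_class U y) (ex_intro _ y (conj ybnd erefl)).
have [y'b y'cl] := rep_bnd Y.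
rewrite /= in y'cl.
have yin : up_class U y y.
  split => //; rewrite /up_seminorm /fam_sub.
  have -> : (fun a => `|y a - y a|) = fun _ => 0 by apply: funext => a; rewrite subrr normr0.
  apply: (cvg_lim_eq UU); exact: cvg_cst.
rewrite y'cl in yin; case: yin => _ yin.
have dcvg : (fun a => `|y a - up_rep Y a|) @ U --> 0.
  rewrite -yin; apply: normcvg; rewrite /fam_sub.
  have [M1 h1] := ybnd; have [M2 h2] := y'b.
  exists (M1 + M2) => a; rewrite normr_id.
  apply: le_trans (ler_normB _ _) _; exact: lerD.
have dU : forall e, 0 < e -> U [set a | `|0 - `|y a - up_rep Y a| | < e].
  by move=> e e0; exact: ((cvgrPdist_lt _ _).1 dcvg e e0).
exists Y.
  rewrite /up_norm /up_seminorm; apply: (cvg_lim_eq UU).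
  apply/cvgrPdist_lt => e e0.
  apply: filterS (dU e e0) => a /=.
  rewrite sub0r normrN normr_id -(yS a); apply: le_lt_trans; exact: ler_dist_dist.
move=> C SC.
have [xb _] := rep_bnd C.
have E : lim ((fun a => `|up_rep C a|) @ U) = 1 := HS C SC.
have Cx := normcvg _ (bnd_norm _ xb); rewrite E in Cx.
have xU : forall e, 0 < e -> U [set a | `|1 - `|up_rep C a| | < e].
  by move=> e e0; exact: ((cvgrPdist_lt _ _).1 Cx e e0).
have [M1 hM1] := xb; have [M2 hM2] := y'b.
split.
- rewrite /up_norm_add /up_seminorm /fam_add.
  have bd : exists M, forall a, `| `|up_rep C a + up_rep Y a| | <= M.
    exists (M1 + M2) => a; rewrite normr_id.
    apply: le_trans (ler_normD (up_rep C a : X' a) (up_rep Y a)) _; exact: lerD.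
  have fl := normcvg _ bd.
  apply: (lim_le_near UU fl) => e e0.
  have e3 : 0 < e / 3 by rewrite divr_gt0.
  apply: filterS (filterI (filterI (xU _ e3) (epsU _ e3)) (dU _ e3)).
  move=> a [[h1 h2] h3] /=.
  apply: (pt_bound' e0 h1 h2 (yS a) h3) => x0.
  have Sx : Sa a ((`|up_rep C a|)^-1 *: up_rep C a) by exists C.
  exact: (yP a _ Sx).1.
- rewrite /up_norm_sub /up_seminorm /fam_sub.
  have bd : exists M, forall a, `| `|up_rep C a - up_rep Y a| | <= M.
    exists (M1 + M2) => a; rewrite normr_id.
    apply: le_trans (ler_normB (up_rep C a : X' a) (up_rep Y a)) _; exact: lerD.
  have fl := normcvg _ bd.
  apply: (lim_le_near UU fl) => e e0.
  have e3 : 0 < e / 3 by rewrite divr_gt0.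
  apply: filterS (filterI (filterI (xU _ e3) (epsU _ e3)) (dU _ e3)).
  move=> a [[h1 h2] h3] /=.
  have ny : `|- y a| = 1 by rewrite normrN yS.
  have h3' : `|0 - `|- y a - - up_rep Y a| | < e / 3 by rewrite -opprD normrN.
  apply: (pt_bound' e0 h1 h2 ny h3') => x0.
  have Sx : Sa a ((`|up_rep C a|)^-1 *: up_rep C a) by exists C.
  exact: (yP a _ Sx).2.
Qed.
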